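(* There exists a universal constant $c_1>0$ such that for all integers $a\ge1$ and $i\ge1$, \[ e^{-c_1(2a)^{-2i/3}}\le g_{a,i}\le e^{c_1(2a)^{-2i/3}}. \] Consequently, $e^{-(c_1/4)/a^2}\le g_{a,i}\le e^{(c_1/4)/a^2}$ for all $a,i\ge1$.
   Context: For integers $a,i\ge1$ let $f_{a,i}=\frac1{2i}\sum_{d\mid i,\ d\text{ odd}}\mu(d)(2a)^{i/d}$, where $\mu$ is the Möbius function and the sum is over positive odd divisors $d$ of $i$, and define $g_{a,i}$ by $f_{a,i}=\frac{(2a)^i}{2i}g_{a,i}$. *)

(* Defs.v *)
From mathcomp Require Import all_boot all_order all_algebra.
From mathcomp Require Import all_classical all_reals all_analysis.
Import Order.TTheory GRing.Theory Num.Theory.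
Local Open Scope ring_scope.

Definition mobius (n : nat) : int :=
  if (0 < n)%N && all (fun p => logn p n <= 1)%N (primes n)
  then (-1) ^+ size (primes n) else 0.

Definition f_ai {R : realType} (a i : nat) : R :=
  (2 * i%:R)^-1 *
  \sum_(d <- divisors i | odd d) (mobius d)%:~R * ((2 * a)%:R) ^+ (i %/ d).

Definition g_ai {R : realType} (a i : nat) : R :=
  f_ai a i / (((2 * a)%:R) ^+ i / (2 * i%:R)).

(* Main.v *)
Require Import Defs.
From mathcomp Require Import all_boot all_order all_algebra.
From mathcomp Require Import all_classical all_reals all_analysis.
From mathcomp Require Import zify ring lra.
Import Order.TTheory GRing.Theory Num.Theory.
Lemma geom_nat (x m : nat) : (2 <= x)%N -> (\sum_(0 <= k < m.+1) x ^ k < 2 * x ^ m)%N.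
Proof.
move=> hx; elim: m => [|m IH]; first by rewrite big_nat1 expn0.
rewrite big_nat_recr //= expnS.
have : (2 * x ^ m <= x * x ^ m)%N by rewrite leq_mul2r hx orbT.
lia.
Qed.

Lemma sub_sum_nat (x i : nat) : (0 < i)%N -> (2 <= x)%N ->
  (\sum_(d <- [seq d <- divisors i | odd d] | d != 1%N) x ^ (i %/ d) <= 2 * x ^ (i %/ 3))%N.
Proof.
move=> hi hx.
rewrite -big_filter -(big_map (fun d => i %/ d) xpredT (fun k => x ^ k)).
have H := ltnW (@geom_nat x (i %/ 3) hx). apply: (leq_trans _ H).
rewrite [X in (_ <= X)%N]big_mkord -(big_mkord xpredT (fun k => x ^ k)) /index_iota subn0.
apply: (uniq_sub_le_big (op := addn) (le := leq)) => //.
- by move=> a b; apply: leq_addr.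
- rewrite map_inj_in_uniq.
    by rewrite !filter_uniq // divisors_uniq.
  move=> d1 d2; rewrite !mem_filter => /andP[_ /andP[_ h1]] /andP[_ /andP[_ h2]] E.
  rewrite -dvdn_divisors // in h1; rewrite -dvdn_divisors // in h2.
  have e1 := divnK h1; have e2 := divnK h2.
  have kp : (0 < i %/ d1)%N.
    by move: e1; case: (i %/ d1) => //= ?; lia.
  apply/eqP; rewrite -(eqn_pmul2r kp); apply/eqP.
  by rewrite mulnC e1 E mulnC e2.
- exact: iota_uniq.
move=> k /mapP[d]; rewrite !mem_filter => /andP[d1 /andP[od hd]] ->.
rewrite mem_iota /= add0n ltnS.
rewrite -dvdn_divisors // in hd.
have dp : (0 < d)%N by case: d d1 hd od.
apply: leq_div2l => //.
by case: d d1 od dp hd => [|[|[|d]]].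
Qed.
Local Open Scope ring_scope.

Lemma mob_norm {R : realType} d : `|(mobius d)%:~R : R| <= 1.
Proof.
rewrite /mobius; case: ifP => _; last by rewrite normr0.
by rewrite rmorphXn /= rmorphN1 normrX normrN1 expr1n.
Qed.

Lemma mob1 : mobius 1 = 1.
Proof. by []. Qed.

Definition rest {R : realType} (a i : nat) : R :=
  \sum_(d <- [seq d <- divisors i | odd d] | d != 1%N)
     (mobius d)%:~R * ((2 * a)%:R) ^+ (i %/ d).

Lemma g_decomp {R : realType} (a i : nat) : (1 <= a)%N -> (1 <= i)%N ->
  g_ai a i = 1 + (rest a i : R) / ((2 * a)%:R) ^+ i.
Proof.
move=> ha hi.
have X0 : ((2 * a)%:R : R) ^+ i != 0 by rewrite expf_neq0 // pnatr_eq0; lia.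
have I0 : (2 * i%:R : R) != 0 by rewrite mulf_neq0 // pnatr_eq0; lia.
rewrite /g_ai /f_ai -big_filter (bigD1_seq 1%N) /=; last 2 first.
- by rewrite mem_filter divisor1.
- by rewrite filter_uniq // divisors_uniq.
rewrite mob1 divn1 /rest.
field.
by rewrite X0 pnatr_eq0; lia.
Qed.

Lemma rest_bound {R : realType} (a i : nat) : (1 <= a)%N -> (1 <= i)%N ->
  `|rest a i : R| <= (2 * (2 * a) ^ (i %/ 3))%N%:R.
Proof.
move=> ha hi.
apply: le_trans (ler_norm_sum _ _ _) _.
apply: le_trans (_ : _ <= ((\sum_(d <- [seq d <- divisors i | odd d] | d != 1%N)
   (2 * a) ^ (i %/ d))%N)%:R) _; last first.
  by rewrite ler_nat; apply: sub_sum_nat => //; lia.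
rewrite natr_sum; apply: ler_sum => d _.
rewrite normrM natrX normrX normr_nat -[X in _ <= X]mul1r ler_wpM2r //.
  exact: mob_norm.
Qed.

Lemma rest0 {R : realType} (a i : nat) : (1 <= i)%N -> (i < 3)%N -> rest a i = 0 :> R.
Proof.
move=> h1 h3; rewrite /rest big_seq_cond big1 // => d.
rewrite mem_filter -dvdn_divisors; last by lia.
move=> /andP[/andP[od hd] d1].
have := dvdn_leq h1 hd.
by case: d od hd d1 => [|[|[|d]]] //; lia.
Qed.

Lemma t_bound {R : realType} (a i : nat) : (1 <= a)%N ->
  (2 * (2 * a) ^ (i %/ 3))%N%:R / ((2 * a)%:R : R) ^+ i <=
  2 * powR ((2 * a)%:R) (- ((2 * i)%:R / 3)).
Proof.
move=> ha.
have X1 : (1 : R) <= (2 * a)%:R by rewrite ler1n; lia.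
rewrite natrM natrX -mulrA ler_pM2l //.
rewrite -!powR_mulrn ?(le_trans _ X1) // -powRB; last first.
  by apply/implyP => _; rewrite pnatr_eq0; lia.
apply: ler_powR => //.
have : ((i %/ 3) * 3 <= i)%N := leq_divM i 3.
rewrite -(ler_nat R) natrM natrM => H.
lra.
Qed.

Lemma e_triv {R : realType} (y : R) : 0 <= y -> expR (- y) <= 1 /\ 1 <= expR y.
Proof.
move=> y0.
have h : 1 <= expR y by apply: le_trans (expR_ge1Dx y); lra.
by split => //; rewrite expRN invf_le1 ?expR_gt0.
Qed.

Lemma core {R : realType} (s u : R) : 0 <= s -> s <= 1/4 -> `|u| <= 2 * s ->
  expR (- (4 * s)) <= 1 + u /\ 1 + u <= expR (4 * s).
Proof.
move=> s0 s4; rewrite ler_norml => /andP[u1 u2].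
have hE := expR_ge1Dx (4 * s).
have E0 := expR_gt0 (4 * s).
split; last by lra.
rewrite expRN -[_^-1]mul1r ler_pdivrMr //.
have h1 : 0 <= (1 - 2 * s) * (expR (4 * s) - (1 + 4 * s)) by apply: mulr_ge0; lra.
have h2 : 0 <= (u + 2 * s) * expR (4 * s) by apply: mulr_ge0; lra.
have h3 : 0 <= s * (2 - 8 * s) by apply: mulr_ge0; lra.
nra.
Qed.

Theorem lemma3p1 (R : realType) :
  exists c1 : R, 0 < c1 /\
    forall a i : nat, (1 <= a)%N -> (1 <= i)%N ->
      (expR (- (c1 * powR ((2 * a)%:R) (- ((2 * i)%:R / 3)))) <= g_ai a i
       /\ g_ai a i <= expR (c1 * powR ((2 * a)%:R) (- ((2 * i)%:R / 3))))
      /\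
      (expR (- ((c1 / 4) / (a%:R ^+ 2))) <= g_ai a i
       /\ g_ai a i <= expR ((c1 / 4) / (a%:R ^+ 2))).
Proof.
exists 4; split => // a i ha hi.
have t0 : 0 <= powR ((2 * a)%:R : R) (- ((2 * i)%:R / 3)) := powR_ge0 _ _.
have a0 : (1 : R) <= a%:R by rewrite ler1n.
have q0 : 0 <= (4 : R) / 4 / a%:R ^+ 2.
  by apply: divr_ge0 => //; apply: exprn_ge0; lra.
rewrite (g_decomp (R:=R) a i ha hi).
case: (ltnP i 3) => hi3.
  rewrite rest0 // mul0r addr0.
  have [e1 e2] := e_triv _ (mulr_ge0 (ler0n R 4) t0).
  have [e3 e4] := e_triv _ q0.
  by [].
set X : R := (2 * a)%:R.
set t := powR X _.
have Xi0 : 0 < X ^+ i by apply: exprn_gt0; rewrite /X ltr0n; lia.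
have hr : `|rest a i / X ^+ i| <= 2 * t.
  rewrite normrM normfV (ger0_norm (ltW Xi0)).
  apply: le_trans (t_bound a i ha).
  by rewrite ler_pM2r ?invr_gt0 // rest_bound.
have tq : t <= 1 / 4 / a%:R ^+ 2.
  apply: (@le_trans _ _ (powR X (- 2%:R))).
    apply: ler_powR; first by rewrite /X ler1n; lia.
    have : (3 <= i)%N := hi3.
    rewrite -(ler_nat R) natrM => H. lra.
  rewrite powRN powR_mulrn ?ler0n // /X natrM exprMn.
  rewrite (_ : (2:R) ^+ 2 = 4); last by rewrite expr2; lra.
  by rewrite invfM div1r.
have s4 : t <= 1 / 4.
  apply: le_trans tq _.
  rewrite ler_pdivrMr; last by apply: exprn_gt0; lra.
  have : 1 <= a%:R ^+ 2 :> R by rewrite expr_ge1.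
  lra.
have [c1 c2] := core _ _ t0 s4 hr.
have -> : (4 : R) / 4 / a%:R ^+ 2 = 4 * (1 / 4 / a%:R ^+ 2) by rewrite mul1r mulrA.
move: tq; set y := 1 / 4 / a%:R ^+ 2 => tq.
split; first by [].
split.
  apply: le_trans c1; rewrite ler_expR; rewrite /t /X in tq; lra.
apply: le_trans c2 _; rewrite ler_expR; rewrite /t /X in tq; lra.
Qed.
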